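(* Let $d \in \mathbb{N}$ (with $d\ge 1$). Then every strongly $d$-degenerate graph $G$ satisfies $\mathrm{HG}(G) \le (2d)^d$.
   Context: All graphs are finite and simple. Hat guessing game: players sit on the vertices of a graph $G$; a strategy with $q$ colours is a family $(f_v)_{v\in V(G)}$ with $f_v\colon [q]^{N_G(v)}\to[q]$. An adversary chooses a colouring $c\colon V(G)\to[q]$; the strategy is winning if for every $c$ there is a vertex $v$ with $f_v((c(w))_{w\in N_G(v)})=c(v)$. The hat guessing number $\mathrm{HG}(G)$ is the largest integer $q$ for which a winning strategy with $q$ colours exists. For an integer $d\ge1$, a vertex $v$ of a graph $G$ is $d$-removable in $G$ if $d_G(v)\le d$ and at most one neighbour $w$ of $v$ has $d_G(w)>d$. A graph $G$ is strongly $d$-degenerate if every non-empty subgraph $G'$ of $G$ contains a vertex which is $d$-removable in $G'$. *)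

(* Defs.v *)
From mathcomp Require Import all_boot.
Set Implicit Arguments. Unset Strict Implicit. Unset Printing Implicit Defensive.

Definition simple_graph (T : finType) (e : rel T) : Prop :=
  symmetric e /\ irreflexive e.

Definition subgraph (T : finType) (e : rel T) (S : {set T}) (e' : rel T) : Prop :=
  symmetric e' /\ (forall x y, e' x y -> e x y) /\
  (forall x y, e' x y -> (x \in S) && (y \in S)).

Definition deg (T : finType) (S : {set T}) (e' : rel T) (v : T) : nat :=
  #|[set w in S | e' v w]|.

Definition removable (T : finType) (d : nat) (S : {set T}) (e' : rel T) (v : T) : bool :=
  (v \in S) && (deg S e' v <= d) &&
  (#|[set w in S | e' v w & d < deg S e' w]| <= 1).

Definition strongly_degenerate (T : finType) (e : rel T) (d : nat) : Prop :=
  forall (S : {set T}) (e' : rel T), subgraph e S e' -> S != set0 ->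
    exists2 v, v \in S & removable d S e' v.

Definition strategy (T : finType) (e : rel T) (q : nat)
    (f : T -> {ffun T -> 'I_q} -> 'I_q) : Prop :=
  forall v (c c' : {ffun T -> 'I_q}),
    (forall w, e v w -> c w = c' w) -> f v c = f v c'.

Definition winning (T : finType) (e : rel T) (q : nat)
    (f : T -> {ffun T -> 'I_q} -> 'I_q) : Prop :=
  strategy e f /\ forall c : {ffun T -> 'I_q}, exists v, f v c = c v.

Definition hat_winnable (T : finType) (e : rel T) (q : nat) : Prop :=
  exists f : T -> {ffun T -> 'I_q} -> 'I_q, winning e f.

(* Main.v *)
Require Import Defs.
From mathcomp Require Import all_boot.
From mathcomp Require Import zify.
Set Implicit Arguments. Unset Strict Implicit. Unset Printing Implicit Defensive.

Definition eS (T : finType) (e : rel T) (S : {set T}) : rel T :=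
  fun x y => [&& x \in S, y \in S & e x y].

Definition upd (T : finType) q (c : {ffun T -> 'I_q}) (v : T) (b : 'I_q)
  : {ffun T -> 'I_q} := [ffun w => if w == v then b else c w].

Lemma degE (T : finType) (e : rel T) (S : {set T}) u :
  u \in S -> deg S (eS e S) u = #|[set w in S | e u w]|.
Proof.
move=> uS; rewrite /deg; apply: eq_card => w; rewrite !inE /eS uS /=.
by case: (w \in S).
Qed.

Lemma degD1 (T : finType) (e : rel T) (S : {set T}) u v :
  u \in S :\ v -> v \in S ->
  deg S (eS e S) u = e u v + deg (S :\ v) (eS e (S :\ v)) u.
Proof.
move=> uS' vS; have uS : u \in S by move: uS'; rewrite inE => /andP[].
rewrite !degE // (cardsD1 v [set w in S | e u w]); congr (_ + _).
  by rewrite inE vS.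
by apply: eq_card => w; rewrite !inE; case: (w == v).
Qed.
Lemma card_bigcup_le (I T : finType) (P : {pred I}) (F : I -> {set T}) :
  #|\bigcup_(i in P) F i| <= \sum_(i in P) #|F i|.
Proof.
apply: (big_ind2 (fun (X : {set T}) n => #|X| <= n)).
- by rewrite cards0.
- move=> X1 n1 X2 n2 h1 h2; apply: leq_trans (leq_card_setU X1 X2).1 _.
  exact: leq_add.
- by [].
Qed.

Lemma double_count q (F : 'I_q -> {set 'I_q}) (t s : nat) :
  (forall b, #|F b| <= s) ->
  #|[set a | t <= #|[set b | a \in F b]|]| * t <= q * s.
Proof.
move=> Hs.
rewrite -sum_nat_const.
apply: leq_trans (_ : \sum_(a in [set a | t <= #|[set b | a \in F b]|]) #|[set b | a \in F b]| <= _).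
  by apply: leq_sum => a; rewrite inE.
apply: leq_trans (_ : \sum_a #|[set b | a \in F b]| <= _).
  rewrite [X in _ <= X](bigID (mem [set a | t <= #|[set b | a \in F b]|])) /=.
  exact: leq_addr.
have -> : \sum_a #|[set b | a \in F b]| = \sum_a \sum_b (a \in F b : nat).
  apply: eq_bigr => a _; rewrite -sum1_card big_mkcond /=.
  by apply: eq_bigr => b _; rewrite inE; case: (a \in F b).
rewrite exchange_big /=.
apply: leq_trans (_ : \sum_(b < q) s <= _); last by rewrite sum_nat_const card_ord mulnC.
apply: (@leq_sum _ _ _ (fun b => \sum_(i < q) (i \in F b : nat)) (fun _ => s)) => b _.
apply: leq_trans (Hs b); rewrite -sum1_card [X in _ <= X]big_mkcond /=.
by apply: eq_leq; apply: eq_bigr => a _; case: (a \in F b).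
Qed.

Lemma main_ind (d q : nat) (T : finType) (e : rel T) :
  0 < d -> symmetric e -> irreflexive e -> strongly_degenerate e d ->
  (2 * d) ^ d < q ->
  forall n (S : {set T}), #|S| <= n ->
  forall g : T -> {ffun T -> 'I_q} -> {set 'I_q},
  (forall v, v \in S -> forall c c' : {ffun T -> 'I_q},
      (forall w, w \in S -> e v w -> c w = c' w) -> g v c = g v c') ->
  (forall v c, v \in S -> #|g v c| <= (2 * d) ^ (d - deg S (eS e S) v)) ->
  exists c : {ffun T -> 'I_q}, forall v, v \in S -> c v \notin g v c.
Proof.
move=> d0 esym eirr sdeg qbig.
have q0 : 0 < q by apply: leq_ltn_trans qbig.
elim=> [|n IH] S Sn g gdep gbd.
  exists [ffun _ => Ordinal q0] => v vS.
  by move: Sn; rewrite leqn0 => /eqP /cards0_eq SE; rewrite SE inE in vS.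
case: (eqVneq S set0) => [SE | Sne].
  by exists [ffun _ => Ordinal q0] => v; rewrite SE inE.
have sub : subgraph e S (eS e S).
  split; first by move=> x y; rewrite /eS andbCA esym.
  split; first by move=> x y /and3P[].
  by move=> x y /and3P[-> ->].
have [v vS vrem] := sdeg S (eS e S) sub Sne.
move: vrem; rewrite /removable vS /= => /andP [degv heavy1].
set S' := S :\ v.
set m := q.-1 %/ (2 * d).
pose t u := if d < deg S (eS e S) u then (q./2).+1 else m.+1.
pose g' u (c : {ffun T -> 'I_q}) :=
  if e v u then [set a | t u <= #|[set b | a \in g u (upd c v b)]|] else g u c.
have S'n : #|S'| <= n.
  by move: Sn; rewrite (cardsD1 v S) vS.
have uS'S u : u \in S' -> u \in S by rewrite inE => /andP[].
have g'dep : forall u, u \in S' -> forall c c' : {ffun T -> 'I_q},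
      (forall w, w \in S' -> e u w -> c w = c' w) -> g' u c = g' u c'.
  move=> u uS' c c' hcc; rewrite /g'.
  have uS := uS'S u uS'.
  case: ifP => evu.
    apply/setP => a; rewrite !inE; congr (_ <= _); apply: eq_card => b.
    rewrite !inE (gdep u uS (upd c v b) (upd c' v b)) //.
    move=> w wS euw; rewrite !ffunE; case: eqP => // /eqP wv.
    by apply: hcc => //; rewrite /S' !inE wv wS.
  apply: gdep => // w wS euw; apply: hcc => //; rewrite /S' !inE wS andbT.
  by apply/eqP => wv; move: evu; rewrite -wv esym euw.
have g'bd : forall u c, u \in S' -> #|g' u c| <= (2 * d) ^ (d - deg S' (eS e S') u).
  move=> u c uS'; have uS := uS'S u uS'.
  have hd := degD1 e uS' vS.
  rewrite /g'; case: ifP => evu; last first.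
    have euv : e u v = false by rewrite esym.
    rewrite euv add0n in hd; rewrite -hd; exact: gbd.
  have euv : e u v by rewrite esym.
  rewrite euv add1n -/S' in hd.
  have dc := @double_count q (fun b => g u (upd c v b)) (t u) _
     (fun b => gbd u (upd c v b) uS).
  move: dc; set X := #|[set a | _]|; rewrite /t; case: ifP => hv dc.
    have E1 : d - deg S (eS e S) u = 0 by lia.
    have E2 : d - deg S' (eS e S') u = 0 by lia.
    rewrite E1 expn0 muln1 in dc; rewrite E2 expn0.
    nia.
  have E2 : d - deg S' (eS e S') u = (d - deg S (eS e S) u).+1 by lia.
  rewrite E2 expnS; move: dc; set B := (2 * d) ^ _ => dc.
  have hq : q <= m.+1 * (2 * d).
    have := ltn_ceil q.-1 (_ : 0 < 2 * d); rewrite -/m; move=> /(_ ltac:(lia)).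
    lia.
  have : X * m.+1 <= (2 * d * B) * m.+1.
    apply: leq_trans dc _.
    rewrite mulnAC; apply: leq_mul => //; lia.
  by rewrite leq_pmul2r.
have [c' Hc'] := IH S' S'n g' g'dep g'bd.
set N := [set w in S | eS e S v w].
set HN := [set w in S | eS e S v w & d < deg S (eS e S) w].
pose Bu u := [set b | c' u \in g u (upd c' v b)].
pose Bad := g v c' :|: \bigcup_(u in N) Bu u.
pose w u := if d < deg S (eS e S) u then q./2 else m.
have Nprop u : u \in N -> [/\ u \in S, e v u & u \in S'].
  rewrite /N inE /eS vS /= => /andP[uS /andP[_ evu]]; split => //.
  rewrite /S' !inE uS andbT; apply/eqP => uv; by move: evu; rewrite uv eirr.
have Bu_bd u : u \in N -> #|Bu u| <= w u.
  move=> /Nprop [uS evu uS']; have := Hc' u uS'; rewrite /g' evu inE -ltnNge.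
  by rewrite /t /w; case: ifP.
have sumbd : \sum_(u in N) w u = #|N :&: HN| * q./2 + #|N :\: HN| * m.
  rewrite (big_setID HN) /= -!sum_nat_const; congr (_ + _); apply: eq_bigr => u.
    by rewrite /HN /N !inE /w => /andP[_ /andP[_ /andP[_ ->]]].
  by rewrite /HN /N !inE /w => /andP[/negP hn /andP[uS evu]]; case: ifP => // hh;
     case: hn; rewrite uS evu hh.
have hcard : #|Bad| < q.
  have kE : deg S (eS e S) v = #|N| by [].
  have hle : #|N :&: HN| <= 1 by apply: leq_trans heavy1; apply: subset_leq_card; apply: subsetIr.
  have hlk := cardsID HN N.
  have mq : m * (2 * d) <= q.-1 by apply: leq_divM.
  have bv := gbd v c' vS.
  have hB : (#|N| = 0 /\ (2 * d) ^ (d - #|N|) < q) \/ (2 * d) ^ (d - #|N|) <= m.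
    case: (posnP #|N|) => [-> | kpos]; first by left; rewrite subn0.
    right; rewrite leq_divRL; last by lia.
    rewrite -expnSr; have : (2 * d) ^ (d - #|N|).+1 <= (2 * d) ^ d.
      apply: leq_pexp2l; lia.
    lia.
  have : #|Bad| <= (2 * d) ^ (d - #|N|) + \sum_(u in N) w u.
    apply: leq_trans (leq_card_setU _ _).1 _; rewrite -kE; apply: leq_add => //.
    apply: leq_trans (card_bigcup_le _ _) _; exact: leq_sum.
  rewrite sumbd.
  move: hle hlk hB mq degv; rewrite -kE.
  set h := #|N :&: HN|; set l := #|N :\: HN|; set k := #|N|.
  move=> hle hlk hB mq degv.
  move: ((2 * d) ^ _) hB => X hB.
  move: (deg S (eS e S) v) hlk hB degv => K hlk hB degv.
  have lm : l * m <= (d - h) * m by apply: leq_mul => //; lia.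
  have dm : (d * m).*2 <= q.-1 by rewrite -muln2 -mulnA (mulnC m) mulnA (mulnC d); lia.
  have md : m <= d * m by rewrite leq_pmull.
  case: h hle hlk lm => [|[|h]] //= hle hlk lm.
    rewrite mul0n add0n subn0 in lm *.
    case: hB => [[K0 Xq]|Xm].
      have -> : l = 0 by lia.
      by rewrite mul0n addn0 => hb; lia.
    move=> hb; lia.
  rewrite mul1n mulnBl mul1n in lm *.
  case: hB => [[K0 Xq]|Xm]; first by lia.
  move=> hb.
  have : (q./2).*2 <= q by rewrite -{2}(odd_double_half q); lia.
  lia.
have [b bB] : exists b, b \notin Bad.
  case: (pickP (fun b => b \notin Bad)) => [b hb | hn]; first by exists b.
  exfalso; have : [set: 'I_q] \subset Bad.
    by apply/subsetP => x _; move: (hn x) => /negbFE.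
  by move/subset_leq_card; rewrite cardsT card_ord leqNgt hcard.
exists (upd c' v b) => x xS.
case: (eqVneq x v) => [-> | xv].
  rewrite ffunE eqxx.
  have -> : g v (upd c' v b) = g v c'.
    apply: gdep => // y yS evy; rewrite ffunE; case: eqP => // yv.
    by move: evy; rewrite yv eirr.
  by move: bB; rewrite inE negb_or => /andP[].
rewrite ffunE (negbTE xv).
have xS' : x \in S' by rewrite /S' !inE xv xS.
case: (boolP (e v x)) => evx.
  have xN : x \in N by rewrite /N inE /eS vS xS evx.
  apply/negP => hx; move/negP: bB; apply; rewrite inE; apply/orP; right.
  by apply/bigcupP; exists x => //; rewrite inE.
have -> : g x (upd c' v b) = g x c'.
  apply: gdep => // y yS exy; rewrite ffunE; case: eqP => // yv.
  by move: evx; rewrite -yv esym exy.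
by have := Hc' x xS'; rewrite /g' (negbTE evx).
Qed.


Theorem theorem1p1 (d : nat) (T : finType) (e : rel T) :
  1 <= d -> simple_graph e -> strongly_degenerate e d ->
  forall q : nat, hat_winnable e q -> q <= (2 * d) ^ d.
Proof.
move=> d0 [esym eirr] sdeg q [f [fstrat fwin]].
rewrite leqNgt; apply/negP => qbig.
have hdep : forall v, v \in [set: T] -> forall c c' : {ffun T -> 'I_q},
    (forall w, w \in [set: T] -> e v w -> c w = c' w) ->
    (fun v c => [set f v c]) v c = (fun v c => [set f v c]) v c'.
  move=> v _ c c' h /=; congr [set _]; apply: fstrat => w evw; exact: h.
have hbd : forall v (c : {ffun T -> 'I_q}), v \in [set: T] ->
    #|(fun v c => [set f v c]) v c| <= (2 * d) ^ (d - deg [set: T] (eS e [set: T]) v).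
  by move=> v c _ /=; rewrite cards1 expn_gt0; apply/orP; left; lia.
have [c Hc] := @main_ind d q T e d0 esym eirr sdeg qbig #|[set: T]| [set: T] (leqnn _)
  (fun v c => [set f v c]) hdep hbd.
have [v hv] := fwin c.
by move: (Hc v (in_setT v)); rewrite inE hv eqxx.
Qed.
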